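(* Let $F$ be a positive integer, $l$ a non-negative integer, and $S$ a numerical semigroup with $\mathrm{F}(S)=F$. The following are equivalent: (1) $\mathrm{l}(S)=l$ and $l\ge 2$; (2) there exist a numerical semigroup $T$ with $\mathrm{F}(T)=F$ and $x\in\mathrm{msg}(T)$ such that $\mathrm{l}(T)=l-2$, $\frac{F}{2}<x<F$, and $S=T\setminus\{x\}$.
   Context: A numerical semigroup is a subset $S\subseteq\mathbb{N}$ closed under addition with $0\in S$ and $\mathbb{N}\setminus S$ finite; $\mathrm{F}(S)=\max(\mathbb{Z}\setminus S)$. $\mathrm{msg}(T)$ is the minimal system of generators of $T$. $\mathrm{N}(S)=\{s\in S\mid s<\mathrm{F}(S)\}$, $\mathrm{L}(S)=\{x\in\mathbb{N}\setminus S\mid \mathrm{F}(S)-x\notin \mathrm{N}(S)\}$, $\mathrm{l}(S)=\#\mathrm{L}(S)$. *)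

(* Defs.v *)
From mathcomp Require Import all_boot.
Set Implicit Arguments. Unset Strict Implicit. Unset Printing Implicit Defensive.

Definition numerical_semigroup (S : pred nat) : Prop :=
  [/\ 0 \in S,
      (forall a b, a \in S -> b \in S -> a + b \in S)
    & exists N, forall n, N <= n -> n \in S].

(* Frobenius number: F(S) = max (Z \ S) = F, for F a natural number.
   Negative integers are never in S, so for F >= 0 this literally says
   F \notin S and every integer > F lies in S. *)
Definition frobenius_is (S : pred nat) (F : nat) : Prop :=
  F \notin S /\ forall n, F < n -> n \in S.

Definition in_msg (T : pred nat) (x : nat) : bool :=
  [&& x \in T, 0 < x &
      ~~ [exists a : 'I_x.+1, [exists b : 'I_x.+1,
            [&& 0 < a, 0 < b, (a : nat) \in T, (b : nat) \in T & a + b == x]]]].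

Definition small_elts (S : pred nat) (F : nat) : pred nat :=
  fun s => (s \in S) && (s < F).

(* L(S) = { x in N \ S | F - x \notin N(S) }, where F = F(S).
   Every gap x satisfies x <= F, so L(S) is the filter of [0..F]. *)
Definition Lset (S : pred nat) (F : nat) : seq nat :=
  [seq x <- iota 0 F.+1 | (x \notin S) && ~~ small_elts S F (F - x)].

Definition lnum (S : pred nat) (F : nat) : nat := size (Lset S F).

(* Main.v *)
Require Import Defs.
From mathcomp Require Import all_boot zify.

Lemma count_key (S T : pred nat) F x : x \in T -> F - x \notin T -> x < F -> F < 2*x ->
  (forall y, (y \in S) = (y \in T) && (y != x)) -> lnum S F = lnum T F + 2.
Proof.
move=> xT FxT xF Fx HS.
rewrite /lnum /Lset !size_filter.
set s := iota 0 F.+1.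
set pT := (fun y => (y \notin T) && ~~ small_elts T F (F - y)).
transitivity (count (predU pT (predU (pred1 x) (pred1 (F-x)))) s).
  apply: eq_in_count => y; rewrite mem_iota /= => hy.
  rewrite /pT /small_elts !HS.
  case: (eqVneq y x) => [->|nyx].
    by rewrite (negbTE FxT) andbF /= orbT.
  case: (eqVneq y (F-x)) => [->|nyFx].
    have -> : F - (F - x) = x by lia.
    by rewrite (negbTE FxT) eqxx andbF /= !orbT.
  have nFy : F - y != x by apply/eqP; lia.
  by rewrite nFy /= !andbT !orbF.
have c0 : forall a, count (predI pT a) s = 0 ->
   count (predU pT a) s = count pT s + count a s.
  by move=> a h; rewrite -count_predUI h addn0.
rewrite c0; last first.
  rewrite (eq_count (a2 := pred0)) ?count_pred0 // => y /=.
  case: (eqVneq y x) => [->|nyx]; first by rewrite /pT /= xT.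
  case: (eqVneq y (F-x)) => [->|nyFx]; last by rewrite andbF.
  rewrite /pT /small_elts.
  have -> : F - (F - x) = x by lia.
  by rewrite xT /= xF andbF.
congr addn.
have h := count_predUI (pred1 x) (pred1 (F - x)) s.
rewrite (eq_count (a1 := predI _ _) (a2 := pred0)) in h; last first.
  move=> y /=; apply/negbTE/andP => [[/eqP -> /eqP]]; lia.
rewrite count_pred0 addn0 in h; rewrite h.
rewrite !count_uniq_mem ?iota_uniq // !mem_iota.
have h1 : x < 0 + F.+1 by lia.
have h2 : F - x < 0 + F.+1 by lia.
by rewrite h1 h2.
Qed.

Lemma memL (S : pred nat) F y : (y \in Lset S F) =
  [&& y <= F, y \notin S & ~~ ((F - y \in S) && (F - y < F))].
Proof. by rewrite mem_filter mem_iota /small_elts add0n ltnS andbC andbA. Qed.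

Theorem proposition10 (F l : nat) (S : pred nat) :
  0 < F -> numerical_semigroup S -> frobenius_is S F ->
  ((lnum S F = l /\ 2 <= l) <->
   exists (T : pred nat) (x : nat),
     [/\ numerical_semigroup T /\ frobenius_is T F, in_msg T x,
         lnum T F + 2 = l,
         F < 2 * x /\ x < F
       & forall y, (y \in S) = (y \in T) && (y != x)]).
Proof.
move=> F0 sgS frS; split; last first.
  move=> [T [x [[sgT frT] msg hl [h1 h2] HS]]].
  move/and3P: msg => [xT x0 _].
  case: sgT => _ add _; case: frT => FT _.
  have FxT : F - x \notin T.
    apply/negP => Fx; have := add _ _ xT Fx.
    by rewrite subnKC ?(ltnW h2) // (negbTE FT).
  rewrite (@count_key S T F x xT FxT h2 h1 HS); split; lia.
move=> [hl l2].
case: sgS => S0 addS [N HN]; case: frS => FS FgtS.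
have Lle : forall y, y \in Lset S F -> y <= F by move=> y; rewrite memL => /andP[].
have Lsym : forall y, y \in Lset S F -> F - y \in Lset S F.
  move=> y; rewrite !memL => /and3P[yF yS hy].
  have y0 : y != 0 by apply: contraNneq yS => ->.
  have hFy : F - y \notin S.
    apply: contra hy => ->; rewrite andTb; lia.
  have -> : F - (F - y) = y by lia.
  by rewrite leq_subr hFy (negbTE yS).
have [x0 x0L hx0] : exists2 x0, x0 \in Lset S F & F < 2 * x0.
  case: (boolP (has (fun y => F < 2 * y) (Lset S F))) => [/hasP [x0 ? ?]|/hasPn hn].
    by exists x0.
  have sub : {subset Lset S F <= [:: F %/ 2]}.
    move=> y yL; rewrite inE; have := hn _ yL; have := hn _ (Lsym _ yL).
    have := Lle _ yL; rewrite /= -!leqNgt => ? ? ?; apply/eqP; lia.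
  have := uniq_leq_size (filter_uniq _ (iota_uniq 0 F.+1)) sub.
  rewrite /lnum in hl; rewrite /= hl; lia.
have exP : exists y, (fun y => y \in Lset S F) y by exists x0.
case: (ex_maxnP exP Lle) => x xL xmax.
have x0x := xmax _ x0L.
have h2x : F < 2 * x by lia.
move: (xL); rewrite memL => /and3P[xF xS hx].
have x0' : x != 0 by apply: contraNneq xS => ->.
have FxS : F - x \notin S by apply: contra hx => ->; rewrite andTb; lia.
have xltF : x < F.
  rewrite ltn_neqAle xF andbT; apply: contraNneq hx => ->; rewrite subnn S0; lia.
pose T : pred nat := fun y => (y \in S) || (y == x).
have inT : forall y, (y \in T) = (y \in S) || (y == x) by [].
have addx : forall b, b \in S -> 0 < b -> x + b \in S.
  move=> b bS b0; apply: contraT => xbS.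
  have xbF : x + b < F.
    rewrite ltnNge; apply/negP => hle.
    case: (ltngtP F (x + b)) => [lt|gt|eq]; first by rewrite FgtS in xbS.
      lia.
    have : F - x = b by lia.
    by move=> e; rewrite e bS in FxS.
  have : x + b \in Lset S F.
    rewrite memL xbS (ltnW xbF) /=; apply/negP => /andP[hS _].
    have := addS _ _ hS bS.
    have -> : F - (x + b) + b = F - x by lia.
    by rewrite (negbTE FxS).
  move/xmax; lia.
exists T, x; split.
- split; last first.
    split; first by rewrite inT negb_or FS; apply/eqP; lia.
    by move=> n hn; rewrite inT FgtS.
  split; first by rewrite inT S0.
    move=> a b; rewrite !inT => /orP[aS|/eqP->] /orP[bS|/eqP->].
    + by rewrite addS.
    + by rewrite addnC; case: (posnP a) => [->|a0]; [rewrite addn0 eqxx orbT|rewrite addx].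
    + by case: (posnP b) => [->|b0]; [rewrite addn0 eqxx orbT|rewrite addx].
    + by rewrite FgtS //; lia.
  by exists N => n hn; rewrite inT HN.
- rewrite /in_msg inT eqxx orbT lt0n x0' /=.
  apply/negP => /existsP [a /existsP [b /and5P [a0 b0 aT bT /eqP ab]]].
  move: aT bT; rewrite !inT.
  have /negbTE -> : (a : nat) != x by apply/eqP; lia.
  have /negbTE -> : (b : nat) != x by apply/eqP; lia.
  rewrite !orbF => aS bS; have := addS _ _ aS bS; rewrite ab.
  by rewrite (negbTE xS).
- have xT : x \in T by rewrite inT eqxx orbT.
  have FxT : F - x \notin T by rewrite inT negb_or FxS; apply/eqP; lia.
  have HS : forall y, (y \in S) = (y \in T) && (y != x).
    move=> y; rewrite inT; case: (eqVneq y x) => [->|]; last by rewrite orbF andbT.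
    by rewrite (negbTE xS).
  by rewrite -hl (@count_key S T F x xT FxT xltF h2x HS).
- by split.
- move=> y; rewrite inT; case: (eqVneq y x) => [->|]; last by rewrite orbF andbT.
  by rewrite (negbTE xS).
Qed.
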